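(* Let $E$ be a regular biordered set satisfying (E1), (E2), (E3) below, and let $e_1,\dots,e_n\in E$ satisfy $M(e_i,e_j)=\{0\}$ for all $i\ne j$. Then the element $e_1\oplus e_2\oplus\cdots\oplus e_n$ is well defined (inductively, $((e_1\oplus e_2)\oplus e_3)\oplus\cdots$, each step being defined), the elements $\mathcal L(e_1),\dots,\mathcal L(e_n)$ are independent in the lattice $L(E)=E/\mathcal L$, and $\mathcal L(e_1)\vee\cdots\vee\mathcal L(e_n)=\mathcal L(e_1\oplus\cdots\oplus e_n)$. Conditions: (E1) there exists $0\in E$ with $0\,\omega\,x$ for every $x\in E$; (E2) there is a map $x\mapsto x'$ on $E$ such that for all $x,y\in E$: $(x')'=x$; $y\,\omega^l\,x$ iff $x'\,\omega^r\,y'$; $y\,\omega^l\,x'$ iff $M(y,x)=\{0\}$; (E3) for all $x,y\in E$, if $y\,\omega\,x'$ then $S(x',y')\cap S(y',x')\ne\emptyset$.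
   Context: A regular biordered set is a partial algebra isomorphic to the set of idempotents $E(S)$ of a regular semigroup $S$ (regular: every $x$ has $y$ with $xyx=x$), where $ef$ (computed in $S$) is defined when $\{ef,fe\}\cap\{e,f\}\ne\emptyset$. In $E$: $\omega^l=\{(e,f): ef=e\}$, $\omega^r=\{(e,f): fe=e\}$, $\omega=\omega^l\cap\omega^r$; $M(e,f)=\{g\in E: g\,\omega^l\,e,\ g\,\omega^r\,f\}$; for $g,h\in M(e,f)$, $g\preceq h$ iff $eg\,\omega^r\,eh$ and $gf\,\omega^l\,hf$; $S(e,f)=\{h\in M(e,f): g\preceq h\text{ for all }g\in M(e,f)\}$. Under (E1)–(E3), for $f\,\omega\,e'$ the set $S(e',f')\cap S(f',e')$ has exactly one element $k$, and $e\oplus f:=k'$ (defined only when $f\,\omega\,e'$). $\mathcal L=\omega^l\cap(\omega^l)^{-1}$ with classes $\mathcal L(e)$; $E/\mathcal L$ is ordered by $\mathcal L(e)\le\mathcal L(f)$ iff $e\,\omega^l\,f$ (a lattice with least element $\mathcal L(0)$). Elements $a_1,\dots,a_n$ of a lattice with least element $0$ are independent if $a_i\wedge\bigvee_{j\ne i}a_j=0$ for each $i$. *)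

(* Defs.v *)
(* A regular biordered set is (up to isomorphism) the set E(S)
   of idempotents of a regular semigroup S, with the biorder relations
   computed from the product of S.  We therefore work with an arbitrary
   regular semigroup (S, mul) and restrict all quantifiers to idempotents. *)
From Stdlib Require Import Arith.
Set Implicit Arguments.

Section Biorder.
Variable T : Type.
Variable mul : T -> T -> T.

Definition assoc_law : Prop := forall x y z, mul x (mul y z) = mul (mul x y) z.
Definition regular_law : Prop := forall x, exists y, mul (mul x y) x = x.

Definition idem (x : T) : Prop := mul x x = x.

Definition omegal (e f : T) : Prop := mul e f = e.
Definition omegar (e f : T) : Prop := mul f e = e.
Definition omega (e f : T) : Prop := omegal e f /\ omegar e f.

Definition Mset (e f g : T) : Prop := idem g /\ omegal g e /\ omegar g f.

Definition preceq (e f g h : T) : Prop :=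
  omegar (mul e g) (mul e h) /\ omegal (mul g f) (mul h f).

Definition Sset (e f h : T) : Prop :=
  Mset e f h /\ forall g, Mset e f g -> preceq e f g h.

Definition M_is_singleton (e f z : T) : Prop := forall g, Mset e f g <-> g = z.

Variable zero : T.
Variable prime : T -> T.

Definition E1 : Prop := idem zero /\ forall x, idem x -> omega zero x.

Definition E2 : Prop :=
  (forall x, idem x -> idem (prime x)) /\
  (forall x, idem x -> prime (prime x) = x) /\
  (forall x y, idem x -> idem y -> (omegal y x <-> omegar (prime x) (prime y))) /\
  (forall x y, idem x -> idem y -> (omegal y (prime x) <-> M_is_singleton y x zero)).

Definition E3 : Prop :=
  forall x y, idem x -> idem y -> omega y (prime x) ->
    exists k, Sset (prime x) (prime y) k /\ Sset (prime y) (prime x) k.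

(* e ⊕ f = r : defined only when f ω e', and then r = k' for k in
   S(e',f') ∩ S(f',e') (a set which the paper shows is a singleton). *)
Definition oplus_rel (e f r : T) : Prop :=
  omega f (prime e) /\
  exists k, Sset (prime e) (prime f) k /\ Sset (prime f) (prime e) k /\ r = prime k.

Fixpoint osum (es : nat -> T) (k : nat) (r : T) : Prop :=
  match k with
  | 0 => False
  | 1 => r = es 0
  | S k' => exists s, osum es k' s /\ oplus_rel s (es k') r
  end.

(* u represents the join, in E/L ordered by ω^l, of the classes L(x)
   for x ranging over the idempotents satisfying P *)
Definition is_L_join (P : T -> Prop) (u : T) : Prop :=
  idem u /\ (forall x, P x -> omegal x u) /\
  (forall v, idem v -> (forall x, P x -> omegal x v) -> omegal u v).

(* L(a) ∧ L(b) = L(0) in E/L *)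
Definition L_meet_zero (a b : T) : Prop :=
  forall g, idem g -> omegal g a -> omegal g b -> omegal g zero.

End Biorder.

(* Main.v *)
Require Import Defs.
From Stdlib Require Import Arith Lia.

Lemma oplus_uniq (T : Type) (mul : T -> T -> T) (a b k k' : T) :
  Sset mul a b k -> Sset mul b a k -> Sset mul a b k' -> Sset mul b a k' -> k = k'.
Proof.
  unfold Sset, Mset, preceq, omegal, omegar, idem.
  intros [[Ik [Ka Kb]] Sk] [[_ [Kb' Ka']] _] [[Ik' [K'a K'b]] Sk'] [[_ [K'b' K'a']] _].
  assert (H1 : mul k' k = k).
  { destruct (Sk' k (conj Ik (conj Ka Kb))) as [A _]. rewrite Ka', K'a' in A. exact A. }
  assert (H2 : mul k' k = k').
  { destruct (Sk k' (conj Ik' (conj K'a K'b))) as [_ A]. rewrite K'b', Kb' in A. exact A. }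
  congruence.
Qed.

Lemma osum_uniq (T : Type) (mul : T -> T -> T) (prime : T -> T) (f : nat -> T) :
  forall k r r', osum mul prime f k r -> osum mul prime f k r' -> r = r'.
Proof.
  induction k as [|k IH]; intros r r' H H'.
  - destruct H.
  - destruct k as [|k0].
    + simpl in *. congruence.
    + destruct H as [s [Hs [_ [K [K1 [K2 ->]]]]]].
      destruct H' as [s' [Hs' [_ [K' [K1' [K2' ->]]]]]].
      assert (s = s') by (eapply IH; eauto). subst s'.
      f_equal. eapply oplus_uniq; eauto.
Qed.
Lemma chain (T : Type) (mul : T -> T -> T)
  (Hassoc : assoc_law mul) (zero : T) (prime : T -> T)
  (HE2 : E2 mul zero prime) (HE3 : E3 mul prime)
  (m : nat) (f : nat -> T)
  (Hf : forall i, i < m -> idem mul (f i))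
  (Hp : forall i j, i < m -> j < m -> i <> j -> omega mul (f i) (prime (f j))) :
  forall k0, S k0 <= m -> exists r, osum mul prime f (S k0) r /\ idem mul r /\
    is_L_join mul (fun x => exists j, j < S k0 /\ x = f j) r /\
    (forall g, idem mul g -> (forall j, j < S k0 -> omega mul g (prime (f j))) ->
       omega mul g (prime r)).
Proof.
  destruct HE2 as [Pid [PP [Plr _]]].
  induction k0 as [|k0 IH]; intros Hk.
  - exists (f 0). assert (I0 : idem mul (f 0)) by (apply Hf; lia).
    split; [reflexivity|]. split; [exact I0|]. split.
    + split; [exact I0|]. split.
      * intros x [j [Hj ->]]. assert (j = 0) by lia. subst. exact I0.
      * intros v _ Hv. apply Hv. exists 0. split; [lia|reflexivity].
    + intros g _ Hg. apply Hg. lia.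
  - destruct (IH ltac:(lia)) as [s [Os [Is [[_ [Js Us]] Gs]]]].
    set (k := S k0) in *.
    assert (Ik : idem mul (f k)) by (apply Hf; lia).
    assert (Om : omega mul (f k) (prime s)).
    { apply Gs; [exact Ik|]. intros j Hj. apply Hp; lia. }
    destruct (HE3 s (f k) Is Ik Om) as [K [SK1 SK2]].
    pose proof SK1 as [[IK [K1 K2]] Sand1].
    pose proof SK2 as [[_ [K3 K4]] Sand2].
    unfold omegal, omegar in K1, K2, K3, K4.
    assert (IrK : idem mul (prime K)) by (apply Pid; exact IK).
    assert (PPK : prime (prime K) = K) by (apply PP; exact IK).
    exists (prime K). split.
    { simpl. exists s. split; [exact Os|]. split; [exact Om|]. exists K. auto. }
    split; [exact IrK|]. split.
    + split; [exact IrK|]. split.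
      * intros x [j [Hj ->]].
        assert (Ij : idem mul (f j)) by (apply Hf; lia).
        apply (proj2 (Plr _ _ IrK Ij)). rewrite PPK. unfold omegar.
        destruct (Nat.eq_dec j k) as [->|Hne].
        -- exact K2.
        -- assert (Hjs : omegal mul (f j) s) by (apply Js; exists j; split; [lia|reflexivity]).
           apply (Plr _ _ Is Ij) in Hjs. unfold omegar in Hjs.
           rewrite <- K4 at 1. rewrite Hassoc, Hjs. exact K4.
      * intros v Iv Hv.
        assert (Hsv : omegal mul s v) by (apply Us; [exact Iv|]; intros x [j [Hj ->]]; apply Hv; exists j; split; [lia|reflexivity]).
        assert (Hkv : omegal mul (f k) v) by (apply Hv; exists k; split; [lia|reflexivity]).
        apply (Plr _ _ Iv Is) in Hsv. apply (Plr _ _ Iv Ik) in Hkv.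
        unfold omegar in Hsv, Hkv.
        apply (proj2 (Plr _ _ Iv IrK)). rewrite PPK. unfold omegar.
        assert (Iv' : idem mul (prime v)) by (apply Pid; exact Iv).
        unfold idem in Iv'.
        set (s' := prime s) in *. set (v' := prime v) in *. set (fk' := prime (f k)) in *.
        assert (Mg : Mset mul s' fk' (mul v' s')).
        { unfold Mset, idem, omegal, omegar. split; [|split].
          - rewrite Hassoc. rewrite <- (Hassoc v' s' v'). rewrite Hsv, Iv'. reflexivity.
          - rewrite <- Hassoc. assert (Is' : idem mul s') by (apply Pid; exact Is).
            unfold idem in Is'. rewrite Is'. reflexivity.
          - rewrite Hassoc, Hkv. reflexivity. }
        destruct (Sand1 _ Mg) as [A _]. unfold omegar in A.
        rewrite K4, (Hassoc s' v' s'), Hsv in A.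
        assert (B : mul (mul K (mul v' s')) v' = mul (mul v' s') v') by (rewrite A; reflexivity).
        rewrite <- !Hassoc in B. rewrite Hsv, Iv' in B. exact B.
    + intros g Ig Hg.
      assert (Hgs : omega mul g (prime s)) by (apply Gs; [exact Ig|]; intros j Hj; apply Hg; lia).
      assert (Hgk : omega mul g (prime (f k))) by (apply Hg; lia).
      destruct Hgs as [G1 G2]. destruct Hgk as [G3 G4].
      unfold omegal, omegar in G1, G2, G3, G4.
      assert (Mg : Mset mul (prime s) (prime (f k)) g) by (split; [exact Ig| split; [exact G1|exact G4]]).
      destruct (Sand1 _ Mg) as [A B]. unfold omegar, omegal in A, B.
      rewrite G2, K4 in A. rewrite G3, K3 in B.
      rewrite PPK. split; [exact B|exact A].
Qed.

Lemma join_ext (T : Type) (mul : T -> T -> T) (P Q : T -> Prop) (u : T) :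
  (forall x, P x <-> Q x) -> is_L_join mul P u -> is_L_join mul Q u.
Proof.
  intros H [I [A B]]. split; [exact I|]. split.
  - intros x Hx. apply A, H, Hx.
  - intros v Iv Hv. apply B; [exact Iv|]. intros x Hx. apply Hv, H, Hx.
Qed.

Theorem proposition5p5
  (T : Type) (mul : T -> T -> T)
  (Hassoc : assoc_law mul) (Hreg : regular_law mul)
  (zero : T) (prime : T -> T)
  (HE1 : E1 mul zero) (HE2 : E2 mul zero prime) (HE3 : E3 mul prime)
  (n : nat) (Hn : 1 <= n) (e : nat -> T)
  (He : forall i, i < n -> idem mul (e i))
  (HM : forall i j, i < n -> j < n -> i <> j -> M_is_singleton mul (e i) (e j) zero) :
  (* the iterated sum is well defined at every stage *)
  (forall k, 1 <= k -> k <= n ->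
     exists r, osum mul prime e k r /\ forall r', osum mul prime e k r' -> r' = r) /\
  (* L(e_1), ..., L(e_n) are independent in E/L *)
  (forall i, i < n ->
     exists u, is_L_join mul (fun x => exists j, j < n /\ j <> i /\ x = e j) u /\
               L_meet_zero mul zero (e i) u) /\
  (* L(e_1) ∨ ... ∨ L(e_n) = L(e_1 ⊕ ... ⊕ e_n) *)
  (forall r, osum mul prime e n r ->
     is_L_join mul (fun x => exists j, j < n /\ x = e j) r).
Proof.
  pose proof HE2 as [Pid [PP [Plr P4]]].
  assert (Hpair : forall i j, i < n -> j < n -> i <> j -> omega mul (e i) (prime (e j))).
  { intros i j Hi Hj Hij. split.
    - apply (proj2 (P4 (e j) (e i) (He j Hj) (He i Hi))). apply HM; auto.
    - assert (A : omegal mul (e j) (prime (e i))).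
      { apply (proj2 (P4 (e i) (e j) (He i Hi) (He j Hj))). apply HM; auto. }
      apply (Plr _ _ (Pid _ (He i Hi)) (He j Hj)) in A.
      rewrite PP in A by (apply He; exact Hi). exact A. }
  pose proof (chain T mul Hassoc zero prime HE2 HE3 n e He Hpair) as Ch.
  split; [|split].
  - intros k Hk1 Hk2. destruct k as [|k0]; [lia|].
    destruct (Ch k0 Hk2) as [r [Or _]]. exists r. split; [exact Or|].
    intros r' Or'. eapply osum_uniq; eauto.
  - intros i Hi. destruct n as [|n0]; [lia|]. destruct n0 as [|n1].
    + exists zero. destruct HE1 as [Iz Hz]. split.
      * split; [exact Iz|]. split.
        -- intros x [j [Hj [Hji _]]]. lia.
        -- intros v Iv _. apply (Hz v Iv).
      * intros g _ _ Hg. exact Hg.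
    + set (f := fun j => if Nat.ltb j i then e j else e (S j)).
      assert (Fspec : forall j, j < S n1 -> exists j', j' < S (S n1) /\ j' <> i /\ f j = e j').
      { intros j Hj. unfold f. destruct (Nat.ltb_spec j i).
        - exists j. repeat split; auto; lia.
        - exists (S j). repeat split; auto; lia. }
      assert (Hf : forall j, j < S n1 -> idem mul (f j)).
      { intros j Hj. destruct (Fspec j Hj) as [j' [A [_ ->]]]. apply He; exact A. }
      assert (Hpf : forall a b, a < S n1 -> b < S n1 -> a <> b -> omega mul (f a) (prime (f b))).
      { intros a b Ha Hb Hab. unfold f.
        destruct (Nat.ltb_spec a i), (Nat.ltb_spec b i); apply Hpair; lia. }
      destruct (chain T mul Hassoc zero prime HE2 HE3 (S n1) f Hf Hpf n1 (le_n _)) as [r [_ [Ir [Jr Gr]]]].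
      exists r. split.
      * eapply join_ext; [|exact Jr]. intros x. split.
        -- intros [j [Hj ->]]. destruct (Fspec j Hj) as [j' [A [B C]]]. exists j'. auto.
        -- intros [j [Hj [Hji ->]]]. destruct (Nat.ltb_spec j i).
           ++ exists j. split; [lia|]. unfold f. destruct (Nat.ltb_spec j i); [reflexivity|lia].
           ++ exists (j - 1). split; [lia|]. unfold f. destruct (Nat.ltb_spec (j-1) i); [lia|].
              f_equal. lia.
      * assert (Om : omega mul (e i) (prime r)).
        { apply Gr; [apply He; exact Hi|]. intros j Hj. unfold f.
          destruct (Nat.ltb_spec j i); apply Hpair; lia. }
        destruct Om as [Om1 _].
        intros g Ig Hgi Hgr. unfold omegal in *.
        assert (Hg' : mul g (prime r) = g) by (rewrite <- Hgi at 1; rewrite <- Hassoc, Om1; exact Hgi).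
        apply (P4 r g Ir Ig) in Hg'. unfold idem in Ig, Ir.
        assert (Hrg : mul r g = zero).
        { apply (Hg' (mul r g)). unfold Mset, idem, omegal, omegar. split; [|split].
          - rewrite Hassoc. rewrite <- (Hassoc r g r). rewrite Hgr, <- Hassoc, Ig. reflexivity.
          - rewrite <- Hassoc, Ig. reflexivity.
          - rewrite Hassoc, Ir. reflexivity. }
        rewrite <- Hrg, Hassoc, Hgr, Ig. reflexivity.
  - intros r Or. destruct n as [|n0]; [lia|].
    destruct (Ch n0 (le_n _)) as [r0 [Or0 [_ [J _]]]].
    rewrite (osum_uniq T mul prime e _ _ _ Or Or0). exact J.
Qed.
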